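(* Let $X$ be a $T_1$ space. For open $U,V\subseteq X$ let $\mathrm{Homeo}^l_X(U,V)$ be the set of local homeomorphisms $U\to V$; with composition of maps and the inclusion maps $U\hookrightarrow V$ for $U\subseteq V$, this is a small category containing $X_{top}$ as a subcategory. Then $\mathrm{Homeo}^l_X$ is a pseudogroup sheaf on $X$.
   Context: $X_{top}$ denotes the set of open subsets of $X$, regarded as a category with exactly one morphism $U\to V$ iff $U\subseteq V$. Let $\mathcal C$ be a small category with $\mathrm{Ob}(\mathcal C)=X_{top}$ containing $X_{top}$ as a subcategory (identity on objects). For each open $V$, $\mathcal C(-,V)$ is a presheaf of sets on $X$ (restriction along $U'\subseteq U$ = precomposition with the inclusion morphism). For $x\in X$ let $\mathcal C_x(V)=\operatorname{colim}_{U\ni x}\mathcal C(U,V)$ (germ of $f\in\mathcal C(U,V)$ at $x$ written $f_x$); postcomposition with inclusions makes this functorial in $V$, and for $y\in X$ let $\mathcal C_x^y=\lim_{V\ni y}\mathcal C_x(V)$ (limit over open neighbourhoods of $y$), with projections $\mathcal C_x^y\to\mathcal C_x(V)$. Composition in $\mathcal C$ induces $\mathcal C_y^z\times\mathcal C_x^y\to\mathcal C_x^z$: given $\varphi\in\mathcal C_x^y,\psi\in\mathcal C_y^z$ and open $W\ni z$, choose $g\in\mathcal C(V,W)$, $y\in V$, representing the component $\psi_W$, and $f\in\mathcal C(U,V)$ representing $\varphi_V$; the $W$-component of $\psi\circ\varphi$ is $(g\circ f)_x$. This defines a category $\mathcal C^\star$ with objects the points of $X$ and $\mathcal C^\star(x,y)=\mathcal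 C_x^y$. For $X$ a $T_1$ space, a pre-pseudogroup on $X$ is such a $\mathcal C$ satisfying: (1) $\mathrm{Ob}(\mathcal C)=\mathrm{Ob}(X_{top})$; (2) for every open $V$ and $x\in X$, the map $\coprod_{y\in V}\mathcal C_x^y\to\mathcal C_x(V)$ induced by the projections is a bijection; (3) $\mathcal C^\star$ is a groupoid. A pseudogroup sheaf on $X$ is a pre-pseudogroup such that moreover (4) each presheaf $\mathcal C(-,V)$ is a sheaf. *)

(* Defs.v *)
From Stdlib Require Import FunctionalExtensionality PropExtensionality ProofIrrelevance.
Set Implicit Arguments.
Unset Strict Implicit.

Record topology (X : Type) : Type := Topology {
  is_open : (X -> Prop) -> Prop;
  open_full : is_open (fun _ => True);
  open_inter : forall A B, is_open A -> is_open B -> is_open (fun x => A x /\ B x);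
  open_union : forall (I : Type) (F : I -> X -> Prop),
      (forall i, is_open (F i)) -> is_open (fun x => exists i, F i x) }.

Definition T1 {X : Type} (T : topology X) : Prop :=
  forall x y : X, x <> y -> exists U, is_open T U /\ U x /\ ~ U y.

Lemma open_ext {X} (T : topology X) (A B : X -> Prop) :
  is_open T A -> (forall x, A x <-> B x) -> is_open T B.
Proof.
  intros HA HAB.
  replace B with A; [exact HA|].
  apply functional_extensionality; intro x; apply propositional_extensionality; apply HAB.
Qed.

(** Objects of X_top: the open subsets of X *)
Definition opens {X : Type} (T : topology X) : Type := { U : X -> Prop | is_open T U }.
Definition omem {X : Type} {T : topology X} (U : opens T) (x : X) : Prop := proj1_sig U x.
Definition osub {X : Type} {T : topology X} (U V : opens T) : Prop :=
  forall x, omem U x -> omem V x.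
Definition ointer {X : Type} {T : topology X} (U V : opens T) : opens T :=
  exist _ (fun x => omem U x /\ omem V x) (open_inter (proj2_sig U) (proj2_sig V)).

Lemma osub_refl {X} {T : topology X} (U : opens T) : osub U U.
Proof. intros x h; exact h. Qed.
Lemma osub_interl {X} {T : topology X} (U V : opens T) : osub (ointer U V) U.
Proof. intros x [h _]; exact h. Qed.
Lemma osub_interr {X} {T : topology X} (U V : opens T) : osub (ointer U V) V.
Proof. intros x [_ h]; exact h. Qed.

Arguments osub_refl {X T} U.
Arguments osub_interl {X T} U V.
Arguments osub_interr {X T} U V.

Record ocat {X : Type} (T : topology X) : Type := OCat {
  hom : opens T -> opens T -> Type;
  comp : forall U V W : opens T, hom V W -> hom U V -> hom U W;
  idm : forall U : opens T, hom U U;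
  incl : forall U V : opens T, osub U V -> hom U V }.
Arguments hom {X T} o U V.
Arguments comp {X T} o {U V W} g f.
Arguments idm {X T} o U.
Arguments incl {X T} o {U V} h.

(** C is a category containing X_top as a (identity-on-objects) subcategory *)
Definition is_ocat {X : Type} {T : topology X} (C : ocat T) : Prop :=
  (forall (U V W Z : opens T) (h : hom C W Z) (g : hom C V W) (f : hom C U V),
      comp C h (comp C g f) = comp C (comp C h g) f) /\
  (forall (U V : opens T) (f : hom C U V),
      comp C (idm C V) f = f /\ comp C f (idm C U) = f) /\
  (forall (U : opens T) (h : osub U U), incl C h = idm C U) /\
  (forall (U V W : opens T) (h1 : osub U V) (h2 : osub V W) (h3 : osub U W),
      comp C (incl C h2) (incl C h1) = incl C h3).

(** restriction in the presheaf C(-,V): precomposition with an inclusion *)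
Definition res {X : Type} {T : topology X} (C : ocat T) {U' U V : opens T}
  (h : osub U' U) (f : hom C U V) : hom C U' V := comp C f (incl C h).
Arguments res {X T} C {U' U V} h f.

(** * Germs: C_x(V) = colim_{U ∋ x} C(U,V), as a setoid *)
Record germrep {X : Type} {T : topology X} (C : ocat T) (x : X) (V : opens T) : Type :=
  GR { gdom : opens T; gin : omem gdom x; gmap : hom C gdom V }.
Arguments gdom {X T C x V} g.
Arguments gin {X T C x V} g.
Arguments gmap {X T C x V} g.

(** equality in the (filtered) colimit *)
Definition germ_eq {X : Type} {T : topology X} (C : ocat T) (x : X) (V : opens T)
  (a b : germrep C x V) : Prop :=
  exists (W : opens T) (hW : omem W x) (ha : osub W (gdom a)) (hb : osub W (gdom b)),
    res C ha (gmap a) = res C hb (gmap b).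

Definition gpush {X : Type} {T : topology X} (C : ocat T) (x : X) (V V' : opens T)
  (h : osub V V') (a : germrep C x V) : germrep C x V' :=
  @GR X T C x V' (gdom a) (gin a) (comp C (incl C h) (gmap a)).

(** * C_x^y = lim_{V ∋ y} C_x(V): compatible families of germs *)
Record costalk {X : Type} {T : topology X} (C : ocat T) (x y : X) : Type := CoStalk {
  cs : forall V : opens T, omem V y -> germrep C x V;
  cs_compat : forall (V V' : opens T) (hV : omem V y) (hV' : omem V' y) (h : osub V V'),
      germ_eq (gpush h (cs hV)) (cs hV') }.

(** condition (2): coprod_{y ∈ V} C_x^y -> C_x(V), (y,φ) ↦ φ_V, is bijective *)
Definition cond_bij {X : Type} {T : topology X} (C : ocat T) : Prop :=
  forall (V : opens T) (x : X),
    (forall a : germrep C x V,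
        exists (y : X) (hy : omem V y) (phi : costalk C x y), germ_eq (cs phi hy) a) /\
    (forall (y y' : X) (hy : omem V y) (hy' : omem V y')
            (phi : costalk C x y) (phi' : costalk C x y'),
        germ_eq (cs phi hy) (cs phi' hy') ->
        y = y' /\ (forall (W : opens T) (hW : omem W y) (hW' : omem W y'),
                     germ_eq (cs phi hW) (cs phi' hW'))).

(** composition in C^star: chi = psi ∘ phi.  For W ∋ z, g ∈ C(V,W) (y ∈ V)
    representing psi_W and f ∈ C(U,V) representing phi_V, chi_W = (g ∘ f)_x. *)
Definition is_comp {X : Type} {T : topology X} (C : ocat T) (x y z : X)
  (psi : costalk C y z) (phi : costalk C x y) (chi : costalk C x z) : Prop :=
  forall (W : opens T) (hW : omem W z) (g : germrep C y W),
    germ_eq g (cs psi hW) ->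
    forall f : germrep C x (gdom g),
      germ_eq f (cs phi (gin g)) ->
      germ_eq (@GR X T C x W (gdom f) (gin f) (comp C (gmap g) (gmap f))) (cs chi hW).

Definition is_cid {X : Type} {T : topology X} (C : ocat T) (x : X)
  (iota : costalk C x x) : Prop :=
  forall (V : opens T) (hV : omem V x),
    germ_eq (cs iota hV) (@GR X T C x V V hV (idm C V)).

(** condition (3): C^star is a groupoid *)
Definition cond_groupoid {X : Type} {T : topology X} (C : ocat T) : Prop :=
  forall (x y : X) (phi : costalk C x y),
    exists (psi : costalk C y x) (ix : costalk C x x) (iy : costalk C y y),
      is_cid ix /\ is_cid iy /\ is_comp psi phi ix /\ is_comp phi psi iy.

(** condition (4): each presheaf C(-,V) is a sheaf *)
Definition cond_sheaf {X : Type} {T : topology X} (C : ocat T) : Prop :=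
  forall (V U : opens T) (I : Type) (Ui : I -> opens T)
         (hsub : forall i, osub (Ui i) U)
         (hcov : forall x, omem U x -> exists i, omem (Ui i) x)
         (f : forall i, hom C (Ui i) V),
    (forall i j, res C (osub_interl (Ui i) (Ui j)) (f i)
                 = res C (osub_interr (Ui i) (Ui j)) (f j)) ->
    exists f0 : hom C U V,
      (forall i, res C (hsub i) f0 = f i) /\
      (forall g : hom C U V, (forall i, res C (hsub i) g = f i) -> g = f0).

(** Condition (1) (Ob C = Ob X_top) is built into the type [ocat]. *)
Definition pre_pseudogroup {X : Type} {T : topology X} (C : ocat T) : Prop :=
  is_ocat C /\ cond_bij C /\ cond_groupoid C.

Definition pseudogroup_sheaf {X : Type} {T : topology X} (C : ocat T) : Prop :=
  pre_pseudogroup C /\ cond_sheaf C.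

Definition pts {X : Type} {T : topology X} (U : opens T) : Type := { x : X | omem U x }.

(** f : U -> V is a local homeomorphism: every point has an open neighbourhood
    N ⊆ U such that f restricted to N is a homeomorphism onto an open subset
    (injective on N, continuous on N, and mapping open subsets of N to open sets). *)
Definition local_homeo {X : Type} {T : topology X} (U V : opens T) (f : pts U -> pts V) : Prop :=
  forall p : pts U, exists N : X -> Prop,
    is_open T N /\ N (proj1_sig p) /\ (forall x, N x -> omem U x) /\
    (forall q q' : pts U, N (proj1_sig q) -> N (proj1_sig q') -> f q = f q' -> q = q') /\
    (forall O, is_open T O ->
       is_open T (fun x => exists q : pts U, proj1_sig q = x /\ N x /\ O (proj1_sig (f q)))) /\
    (forall O, is_open T O -> (forall x, O x -> N x) ->
       is_open T (fun y => exists q : pts U, O (proj1_sig q) /\ proj1_sig (f q) = y)).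

Definition lhomeo {X : Type} {T : topology X} (U V : opens T) : Type :=
  { f : pts U -> pts V | local_homeo f }.

Lemma pts_inj {X} {T : topology X} (U : opens T) (a b : pts U) :
  proj1_sig a = proj1_sig b -> a = b.
Proof.
  destruct a as [a ha], b as [b hb]; simpl; intro e; subst b.
  f_equal; apply proof_irrelevance.
Qed.

Definition incl_fun {X} {T : topology X} (U V : opens T) (h : osub U V) (p : pts U) : pts V :=
  exist _ (proj1_sig p) (h _ (proj2_sig p)).

Lemma incl_local_homeo {X} {T : topology X} (U V : opens T) (h : osub U V) :
  local_homeo (incl_fun h).
Proof.
  intros p. exists (proj1_sig U). split; [exact (proj2_sig U)|].
  split; [exact (proj2_sig p)|]. split; [intros x hx; exact hx|].
  split; [|split].
  - intros q q' _ _ e. apply pts_inj.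
    apply (f_equal (@proj1_sig _ _)) in e. exact e.
  - intros O HO. apply (open_ext (open_inter (proj2_sig U) HO)).
    intros x; split.
    + intros [hU hO]. exists (exist _ x hU). simpl. auto.
    + intros [q [e [hU hO]]]. subst x. simpl in hO. auto.
  - intros O HO HON. apply (open_ext HO). intros y; split.
    + intros hy. exists (exist _ y (HON y hy)). simpl. auto.
    + intros [q [hq e]]. simpl in e. subst y. exact hq.
Qed.

Lemma comp_local_homeo {X} {T : topology X} (U V W : opens T)
  (g : pts V -> pts W) (f : pts U -> pts V) :
  local_homeo g -> local_homeo f -> local_homeo (fun p => g (f p)).
Proof.
  intros Hg Hf p.
  destruct (Hf p) as [N1 [oN1 [pN1 [sN1 [inj1 [cont1 open1]]]]]].
  destruct (Hg (f p)) as [N2 [oN2 [pN2 [sN2 [inj2 [cont2 open2]]]]]].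
  set (N := fun x => exists q : pts U, proj1_sig q = x /\ N1 x /\ N2 (proj1_sig (f q))).
  assert (HN : forall q : pts U, N (proj1_sig q) -> N1 (proj1_sig q) /\ N2 (proj1_sig (f q))).
  { intros q [q0 [e [h1 h2]]]. rewrite (pts_inj e) in h2. auto. }
  exists N. split; [exact (cont1 N2 oN2)|].
  split; [exists p; auto|].
  split; [intros x [q [e [h1 _]]]; exact (sN1 x h1)|].
  split; [|split].
  - intros q q' hq hq' e. apply HN in hq. apply HN in hq'.
    apply inj1; try tauto. apply inj2; tauto.
  - intros O HO.
    set (O2 := fun y => exists r : pts V, proj1_sig r = y /\ N2 y /\ O (proj1_sig (g r))).
    apply (open_ext (cont1 O2 (cont2 O HO))). intros x; split.
    + intros [q [e [h1 [r [er [h2 hO]]]]]]. exists q. split; [exact e|].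
      split; [exists q; split; [exact e|]; split; [exact h1|]; first [exact h2 | rewrite er in h2; exact h2 | rewrite <- er in h2; exact h2]|].
      rewrite (pts_inj er) in hO. exact hO.
    + intros [q [e [hN hO]]]. subst x. destruct (HN q hN) as [h1 h2].
      exists q. split; [reflexivity|]. split; [exact h1|].
      exists (f q). auto.
  - intros O HO HON.
    set (O1 := fun y => exists q : pts U, O (proj1_sig q) /\ proj1_sig (f q) = y).
    assert (oO1 : is_open T O1).
    { apply open1; [exact HO|]. intros x hx. destruct (HON x hx) as [q [e [h1 _]]]. exact h1. }
    assert (sO1 : forall y, O1 y -> N2 y).
    { intros y [q [hq e]]. subst y. assert (hN : N (proj1_sig q)) by exact (HON _ hq).
      apply HN in hN. tauto. }
    apply (open_ext (open2 O1 oO1 sO1)). intros z; split.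
    + intros [r [[q [hq e]] ez]]. exists q. split; [exact hq|].
      rewrite (pts_inj e). exact ez.
    + intros [q [hq ez]]. exists (f q). split; [|exact ez]. exists q. auto.
Qed.

Definition Homeo_l {X : Type} (T : topology X) : ocat T :=
  @OCat X T (fun U V => lhomeo U V)
    (fun U V W g f => exist _ (fun p => proj1_sig g (proj1_sig f p))
                        (comp_local_homeo (proj2_sig g) (proj2_sig f)))
    (fun U => exist _ (incl_fun (osub_refl U)) (incl_local_homeo (osub_refl U)))
    (fun U V h => exist _ (incl_fun h) (incl_local_homeo h)).

(* Main.v *)
Require Import Defs.
From Stdlib Require Import FunctionalExtensionality PropExtensionality ProofIrrelevance ClassicalEpsilon Classical.

Definition ev {X} {T : topology X} {U V : opens T} (f : lhomeo U V) (p : pts U) : X :=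
  proj1_sig (proj1_sig f p).

Lemma ev_pi {X} {T : topology X} {U V : opens T} (f : pts U -> pts V) (p q : pts U) :
  proj1_sig p = proj1_sig q -> proj1_sig (f p) = proj1_sig (f q).
Proof. intro e. rewrite (pts_inj e). reflexivity. Qed.

Lemma lh_eq {X} {T : topology X} {U V : opens T} (f g : lhomeo U V) :
  (forall p, ev f p = ev g p) -> f = g.
Proof.
  destruct f as [f hf], g as [g hg]; unfold ev; simpl; intro H.
  assert (f = g) by (apply functional_extensionality; intro p; apply pts_inj, H).
  subst g. f_equal. apply proof_irrelevance.
Qed.

Lemma homeo_ocat {X} (T : topology X) : is_ocat (Homeo_l T).
Proof.
  split; [|split; [|split]]; intros;
    try split; apply lh_eq; intros; unfold ev; simpl; try reflexivity; apply ev_pi; reflexivity.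
Qed.

Lemma open_local {X} (T : topology X) (S : X -> Prop) :
  (forall z, S z -> exists A, is_open T A /\ A z /\ forall w, A w -> S w) -> is_open T S.
Proof.
  intro H.
  apply (open_ext (open_union (I := {A : X -> Prop | is_open T A /\ forall w, A w -> S w})
                     (F := fun i => proj1_sig i) (fun i => proj1 (proj2_sig i)))).
  intro z; split.
  - intros [i hz]. exact (proj2 (proj2_sig i) z hz).
  - intros hz. destruct (H z hz) as [A [oA [hA s]]]. exists (exist _ A (conj oA s)). exact hA.
Qed.

Lemma lh_preim {X} {T : topology X} {U V : opens T} (f : pts U -> pts V) : local_homeo f ->
  forall O, is_open T O ->
  is_open T (fun z => exists q : pts U, proj1_sig q = z /\ O (proj1_sig (f q))).
Proof.
  intros Hf O oO. apply open_local. intros z [q [e hO]].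
  destruct (Hf q) as [N [oN [pN [sN [inj [cont opn]]]]]].
  exists (fun x => exists q : pts U, proj1_sig q = x /\ N x /\ O (proj1_sig (f q))).
  split; [exact (cont O oO)|]. split.
  - exists q. subst z. auto.
  - intros w [q' [e' [_ h]]]. eauto.
Qed.

Lemma lh_restr {X} {T : topology X} {U V U' V' : opens T} (f : pts U -> pts V) (g : pts U' -> pts V') :
  local_homeo f -> osub U' U ->
  (forall (p : pts U') (q : pts U), proj1_sig p = proj1_sig q -> proj1_sig (g p) = proj1_sig (f q)) ->
  local_homeo g.
Proof.
  intros Hf hs E p.
  destruct (Hf (exist _ (proj1_sig p) (hs _ (proj2_sig p)))) as [N [oN [pN [sN [inj [cont opn]]]]]].
  exists (fun z => N z /\ omem U' z). split; [exact (open_inter oN (proj2_sig U'))|].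
  split; [split; [exact pN| exact (proj2_sig p)]|].
  split; [intros z [_ h]; exact h|].
  split; [|split].
  - intros q q' [hq _] [hq' _] e. apply pts_inj.
    assert (H := inj (exist _ _ (hs _ (proj2_sig q))) (exist _ _ (hs _ (proj2_sig q'))) hq hq').
    simpl in H.
    apply (f_equal (@proj1_sig _ _)) in H; [exact H|].
    apply pts_inj.
    rewrite <- (E q (exist _ _ (hs _ (proj2_sig q))) eq_refl).
    rewrite <- (E q' (exist _ _ (hs _ (proj2_sig q'))) eq_refl). rewrite e. reflexivity.
  - intros O oO. apply (open_ext (open_inter (cont O oO) (proj2_sig U'))).
    intros z; split.
    + intros [[q [e [hN hO]]] hU']. subst z. exists (exist _ (proj1_sig q) hU'). simpl.
      split; [reflexivity|]. split; [split; assumption|].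
      rewrite (E (exist _ (proj1_sig q) hU') q eq_refl). exact hO.
    + intros [q [e [[hN hU'] hO]]]. subst z. split; [|exact hU'].
      exists (exist _ (proj1_sig q) (hs _ (proj2_sig q))). simpl. split; [reflexivity|].
      split; [exact hN|]. rewrite <- (E q (exist _ (proj1_sig q) (hs _ (proj2_sig q))) eq_refl). exact hO.
  - intros O oO HON.
    apply (open_ext (opn O oO (fun z h => proj1 (HON z h)))). intros y; split.
    + intros [q [hq e]]. exists (exist _ (proj1_sig q) (proj2 (HON _ hq))). simpl.
      split; [exact hq|]. rewrite (E (exist _ (proj1_sig q) (proj2 (HON _ hq))) q eq_refl). exact e.
    + intros [q [hq e]]. exists (exist _ (proj1_sig q) (hs _ (proj2_sig q))). simpl.
      split; [exact hq|]. rewrite <- (E q (exist _ (proj1_sig q) (hs _ (proj2_sig q))) eq_refl). exact e.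
Qed.

Lemma lh_local {X} {T : topology X} {U V : opens T} (f : pts U -> pts V) :
  (forall p : pts U, exists (U' : opens T) (g : pts U' -> pts V),
      omem U' (proj1_sig p) /\ osub U' U /\ local_homeo g /\
      forall (q : pts U') (r : pts U), proj1_sig q = proj1_sig r -> proj1_sig (g q) = proj1_sig (f r)) ->
  local_homeo f.
Proof.
  intros H p. destruct (H p) as [U' [g [hp [hs [Hg E]]]]].
  destruct (Hg (exist _ _ hp)) as [N [oN [pN [sN [inj [cont opn]]]]]].
  exists N. split; [exact oN|]. split; [exact pN|].
  split; [intros z hz; exact (hs _ (sN _ hz))|].
  split; [|split].
  - intros q q' hq hq' e. apply pts_inj.
    assert (H' := inj (exist _ _ (sN _ hq)) (exist _ _ (sN _ hq')) hq hq').
    apply (f_equal (@proj1_sig _ _)) in H'; [exact H'|].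
    apply pts_inj.
    rewrite (E (exist _ _ (sN _ hq)) q eq_refl).
    rewrite (E (exist _ _ (sN _ hq')) q' eq_refl). rewrite e. reflexivity.
  - intros O oO. apply (open_ext (cont O oO)). intros z; split.
    + intros [q [e [hN hO]]]. subst z. exists (exist _ (proj1_sig q) (hs _ (proj2_sig q))).
      simpl. split; [reflexivity|]. split; [exact hN|]. rewrite <- (E q (exist _ (proj1_sig q) (hs _ (proj2_sig q))) eq_refl). exact hO.
    + intros [q [e [hN hO]]]. subst z. exists (exist _ (proj1_sig q) (sN _ hN)).
      simpl. split; [reflexivity|]. split; [exact hN|]. rewrite (E (exist _ (proj1_sig q) (sN _ hN)) q eq_refl). exact hO.
  - intros O oO HON. apply (open_ext (opn O oO HON)). intros y; split.
    + intros [q [hq e]]. exists (exist _ (proj1_sig q) (hs _ (proj2_sig q))). simpl.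
      split; [exact hq|]. rewrite <- (E q (exist _ (proj1_sig q) (hs _ (proj2_sig q))) eq_refl). exact e.
    + intros [q [hq e]]. exists (exist _ (proj1_sig q) (sN _ (HON _ hq))). simpl.
      split; [exact hq|]. rewrite (E (exist _ (proj1_sig q) (sN _ (HON _ hq))) q eq_refl). exact e.
Qed.

Definition fe {X} {T : topology X} {x : X} {V V' : opens T}
  (a : germrep (Homeo_l T) x V) (b : germrep (Homeo_l T) x V') : Prop :=
  exists W : X -> Prop, is_open T W /\ W x /\ (forall z, W z -> omem (gdom a) z) /\
    (forall z, W z -> omem (gdom b) z) /\
    forall (p : pts (gdom a)) (q : pts (gdom b)), proj1_sig p = proj1_sig q -> W (proj1_sig p) ->
      ev (gmap a) p = ev (gmap b) q.

Lemma germ_eq_fe {X} {T : topology X} {x : X} {V : opens T} (a b : germrep (Homeo_l T) x V) :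
  germ_eq a b <-> fe a b.
Proof.
  split.
  - intros [W [hW [ha [hb e]]]]. exists (proj1_sig W). split; [exact (proj2_sig W)|].
    split; [exact hW|]. split; [exact ha|]. split; [exact hb|].
    intros p q epq hp.
    transitivity (ev (res (Homeo_l T) ha (gmap a)) (exist _ (proj1_sig p) hp)).
    { unfold ev; simpl. apply ev_pi. reflexivity. }
    rewrite e. unfold ev; simpl. apply ev_pi. simpl. exact epq.
  - intros [W [oW [xW [ha [hb e]]]]].
    exists (exist _ W oW), xW, ha, hb.
    apply lh_eq. intro p.
    change (ev (gmap a) (incl_fun (ha : osub (exist _ W oW) (gdom a)) p) = ev (gmap b) (incl_fun (hb : osub (exist _ W oW) (gdom b)) p)).
    apply e; [reflexivity| exact (proj2_sig p)].
Qed.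

Lemma fe_sym {X} {T : topology X} {x : X} {V V' : opens T}
  (a : germrep (Homeo_l T) x V) (b : germrep (Homeo_l T) x V') : fe a b -> fe b a.
Proof.
  intros [W [oW [xW [ha [hb e]]]]]. exists W. repeat split; auto.
  intros p q epq hp. symmetry. apply e; [symmetry; exact epq| rewrite <- epq; exact hp].
Qed.

Lemma fe_trans {X} {T : topology X} {x : X} {V V' V'' : opens T}
  (a : germrep (Homeo_l T) x V) (b : germrep (Homeo_l T) x V') (c : germrep (Homeo_l T) x V'') :
  fe a b -> fe b c -> fe a c.
Proof.
  intros [W [oW [xW [ha [hb e]]]]] [W' [oW' [xW' [hb' [hc e']]]]].
  exists (fun z => W z /\ W' z). split; [exact (open_inter oW oW')|].
  split; [split; assumption|]. split; [intros z [h _]; auto|]. split; [intros z [_ h]; auto|].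
  intros p r epr [h1 h2].
  rewrite (e p (exist _ (proj1_sig p) (hb _ h1)) eq_refl h1).
  apply e'; [exact epr| exact h2].
Qed.

Arguments fe_sym {X T x V V' a b}.
Arguments fe_trans {X T x V V' V'' a b c}.

Lemma fe_refl {X} {T : topology X} {x : X} {V : opens T} (a : germrep (Homeo_l T) x V) : fe a a.
Proof.
  exists (omem (gdom a)). split; [exact (proj2_sig (gdom a))|]. split; [exact (gin a)|].
  split; [auto|]. split; [auto|]. intros p q e _. unfold ev. f_equal. f_equal. apply pts_inj; exact e.
Qed.

Lemma fe_push {X} {T : topology X} {x : X} {V V' : opens T} (h : osub V V')
  (a : germrep (Homeo_l T) x V) : fe (gpush h a) a.
Proof.
  exists (omem (gdom a)). split; [exact (proj2_sig (gdom a))|]. split; [exact (gin a)|].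
  split; [auto|]. split; [auto|]. intros p q e _. unfold ev; simpl. apply ev_pi. exact e.
Qed.

Lemma cs_fe {X} {T : topology X} {x y : X} (phi : costalk (Homeo_l T) x y) (V V' : opens T)
  (hV : omem V y) (hV' : omem V' y) : fe (cs phi hV) (cs phi hV').
Proof.
  assert (hM : omem (ointer V V') y) by (split; assumption).
  assert (e1 := cs_compat phi hM hV (osub_interl V V')).
  assert (e2 := cs_compat phi hM hV' (osub_interr V V')).
  apply germ_eq_fe in e1. apply germ_eq_fe in e2.
  apply (@fe_trans _ _ _ _ _ _ _ (cs phi hM)).
  - apply fe_sym. exact (fe_trans (fe_sym (fe_push _ _)) e1).
  - exact (fe_trans (fe_sym (fe_push _ _)) e2).
Qed.

Lemma cs_val {X} {T : topology X} (HT : T1 T) {x y : X} (phi : costalk (Homeo_l T) x y)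
  (V : opens T) (hV : omem V y) (p : pts (gdom (cs phi hV))) :
  proj1_sig p = x -> ev (gmap (cs phi hV)) p = y.
Proof.
  intro ep. destruct (classic (ev (gmap (cs phi hV)) p = y)) as [h|h]; [exact h|].
  exfalso. destruct (HT y _ (fun e => h (eq_sym e))) as [O [oO [yO nO]]].
  set (V' := exist _ O oO : opens T).
  destruct (cs_fe phi V V' hV yO) as [W [oW [xW [ha [hb e]]]]].
  apply nO. rewrite (e p (exist _ x (gin (cs phi (V := V') yO))) ep) by (rewrite ep; exact xW).
  exact (proj2_sig (proj1_sig (gmap (cs phi (V := V') yO)) _)).
Qed.

Definition cdom {X} {T : topology X} {U V : opens T} (f : lhomeo U V) (O : opens T) : opens T :=
  exist _ (fun z => exists q : pts U, proj1_sig q = z /\ omem O (ev f q))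
    (lh_preim (proj1_sig f) (proj2_sig f) _ (proj2_sig O)).

Lemma cdom_sub {X} {T : topology X} {U V : opens T} (f : lhomeo U V) (O : opens T) :
  osub (cdom f O) U.
Proof. intros z [q [e _]]. subst z. exact (proj2_sig q). Qed.

Lemma cdom_in {X} {T : topology X} {U V : opens T} (f : lhomeo U V) (O : opens T)
  (p : pts (cdom f O)) : omem O (ev f (incl_fun (cdom_sub f O) p)).
Proof.
  destruct (proj2_sig p) as [q [e h]]. unfold ev in *.
  rewrite (ev_pi (proj1_sig f) (incl_fun (cdom_sub f O) p) q (eq_sym e)). exact h.
Qed.

Definition cmap {X} {T : topology X} {U V : opens T} (f : lhomeo U V) (O : opens T)
  (p : pts (cdom f O)) : pts O := exist _ (ev f (incl_fun (cdom_sub f O) p)) (cdom_in f O p).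

Lemma cmap_lh {X} {T : topology X} {U V : opens T} (f : lhomeo U V) (O : opens T) :
  local_homeo (cmap f O).
Proof.
  apply (lh_restr (proj1_sig f) (cmap f O) (proj2_sig f) (cdom_sub f O)). intros p q e.
  unfold cmap, ev; simpl. apply ev_pi. exact e.
Qed.

Definition clh {X} {T : topology X} {U V : opens T} (f : lhomeo U V) (O : opens T) :
  lhomeo (cdom f O) O := exist _ (cmap f O) (cmap_lh f O).

Lemma mk_in {X} {T : topology X} {x y0 : X} {V : opens T} (a : germrep (Homeo_l T) x V)
  (e : ev (gmap a) (exist _ x (gin a)) = y0) (O : opens T) (hO : omem O y0) :
  omem (cdom (gmap a) O) x.
Proof. exists (exist _ x (gin a)). split; [reflexivity|]. rewrite e. exact hO. Qed.

Definition mk_cs0 {X} {T : topology X} {x y0 : X} {V : opens T} (a : germrep (Homeo_l T) x V)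
  (e : ev (gmap a) (exist _ x (gin a)) = y0) (O : opens T) (hO : omem O y0) :
  germrep (Homeo_l T) x O := @GR X T (Homeo_l T) x O _ (mk_in a e O hO) (clh (gmap a) O).

Lemma mk_cs0_fe {X} {T : topology X} {x y0 : X} {V : opens T} (a : germrep (Homeo_l T) x V)
  (e : ev (gmap a) (exist _ x (gin a)) = y0) (O : opens T) (hO : omem O y0) :
  fe (mk_cs0 a e O hO) a.
Proof.
  exists (omem (cdom (gmap a) O)). split; [exact (proj2_sig (cdom (gmap a) O))|].
  split; [exact (mk_in a e O hO)|]. split; [auto|]. split; [exact (cdom_sub (gmap a) O)|].
  intros p q epq _. unfold mk_cs0, ev; simpl. apply ev_pi. exact epq.
Qed.

Definition mk_cs {X} {T : topology X} {x y0 : X} {V : opens T} (a : germrep (Homeo_l T) x V)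
  (e : ev (gmap a) (exist _ x (gin a)) = y0) : costalk (Homeo_l T) x y0.
Proof.
  refine (@CoStalk X T (Homeo_l T) x y0 (fun O hO => mk_cs0 a e O hO) _).
  intros O O' hO hO' h. apply germ_eq_fe.
  apply (fe_trans (fe_push _ _)). apply (fe_trans (mk_cs0_fe a e O hO)).
  apply fe_sym. apply mk_cs0_fe.
Defined.

Lemma mk_cs_fe {X} {T : topology X} {x y0 : X} {V : opens T} (a : germrep (Homeo_l T) x V)
  (e : ev (gmap a) (exist _ x (gin a)) = y0) (O : opens T) (hO : omem O y0) :
  fe (cs (mk_cs a e) hO) a.
Proof. exact (mk_cs0_fe a e O hO). Qed.

Lemma homeo_bij {X} (T : topology X) : T1 T -> cond_bij (Homeo_l T).
Proof.
  intros HT V x. split.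
  - intros a. exists (ev (gmap a) (exist _ x (gin a))).
    exists (proj2_sig (proj1_sig (gmap a) (exist _ x (gin a)))).
    exists (mk_cs a eq_refl). apply germ_eq_fe. apply mk_cs_fe.
  - intros y y' hy hy' phi phi' E. apply germ_eq_fe in E.
    assert (ey : y = y').
    { destruct E as [W [oW [xW [ha [hb e]]]]].
      rewrite <- (cs_val HT phi V hy (exist _ x (gin (cs phi hy))) eq_refl).
      rewrite <- (cs_val HT phi' V hy' (exist _ x (gin (cs phi' hy'))) eq_refl).
      apply e; [reflexivity| exact xW]. }
    split; [exact ey|]. intros W hW hW'. apply germ_eq_fe.
    apply (fe_trans (cs_fe phi W V hW hy)). apply (fe_trans E). apply cs_fe.
Qed.

Lemma homeo_sheaf {X} (T : topology X) : cond_sheaf (Homeo_l T).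
Proof.
  intros V U I Ui hsub hcov f Hc.
  assert (cv : forall (i j : I) (q : pts (Ui i)) (r : pts (Ui j)),
             proj1_sig q = proj1_sig r -> ev (f i) q = ev (f j) r).
  { intros i j q r e.
    pose (w := exist (fun z => omem (ointer (Ui i) (Ui j)) z) (proj1_sig q) (conj (proj2_sig q)
                      (eq_ind_r (fun z => omem (Ui j) z) (proj2_sig r) e)) : pts (ointer (Ui i) (Ui j))).
    assert (H := f_equal (fun g : lhomeo (ointer (Ui i) (Ui j)) V => ev g w) (Hc i j)).
    transitivity (ev (res (Homeo_l T) (osub_interl (Ui i) (Ui j)) (f i)) w).
    { unfold res, ev; simpl. apply ev_pi. reflexivity. }
    rewrite H. unfold res, ev; simpl. apply ev_pi. simpl. exact e. }
  pose (idx := fun p : pts U => constructive_indefinite_description _ (hcov _ (proj2_sig p))).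
  pose (f0 := fun p : pts U => proj1_sig (f (proj1_sig (idx p)))
                                 (exist _ (proj1_sig p) (proj2_sig (idx p)))).
  assert (Hf0 : local_homeo f0).
  { apply lh_local. intro p. exists (Ui (proj1_sig (idx p))), (proj1_sig (f (proj1_sig (idx p)))).
    split; [exact (proj2_sig (idx p))|]. split; [exact (hsub _)|].
    split; [exact (proj2_sig (f _))|].
    intros q r e. apply (cv _ _ q _). simpl. exact e. }
  exists (exist _ f0 Hf0). split.
  - intro i. apply lh_eq. intro p. unfold res. unfold ev at 1. simpl. unfold f0.
    apply (cv _ _ _ p). reflexivity.
  - intros g Hg. apply lh_eq. intro p. unfold ev at 2. simpl. unfold f0.
    rewrite <- (Hg (proj1_sig (idx p))). unfold res, ev; simpl. apply ev_pi. reflexivity.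
Qed.

Definition ofull {X} (T : topology X) : opens T := exist _ (fun _ => True) (open_full T).

Definition csF {X} {T : topology X} {x y : X} (phi : costalk (Homeo_l T) x y) :
  germrep (Homeo_l T) x (ofull T) := cs phi (V := ofull T) I.

Definition idg {X} (T : topology X) (x : X) : germrep (Homeo_l T) x (ofull T) :=
  @GR X T (Homeo_l T) x (ofull T) (ofull T) I (idm (Homeo_l T) (ofull T)).

Definition idc {X} (T : topology X) (x : X) : costalk (Homeo_l T) x x :=
  mk_cs (idg T x) eq_refl.

Lemma mk_val {X} {T : topology X} {x y0 : X} {V : opens T} (a : germrep (Homeo_l T) x V)
  (e : ev (gmap a) (exist _ x (gin a)) = y0) (O : opens T) (hO : omem O y0)
  (q : pts (gdom (cs (mk_cs a e) hO))) (p : pts (gdom a)) :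
  proj1_sig q = proj1_sig p -> ev (gmap (cs (mk_cs a e) hO)) q = ev (gmap a) p.
Proof. intro E. unfold ev; simpl. apply ev_pi. exact E. Qed.

Lemma idc_dom {X} (T : topology X) (x : X) (O : opens T) (hO : omem O x) (w : X) :
  omem O w -> omem (gdom (cs (idc T x) hO)) w.
Proof. intro h. exists (exist _ w I). split; [reflexivity| exact h]. Qed.

Lemma idc_val {X} (T : topology X) (x : X) (O : opens T) (hO : omem O x)
  (q : pts (gdom (cs (idc T x) hO))) : ev (gmap (cs (idc T x) hO)) q = proj1_sig q.
Proof. reflexivity. Qed.

Lemma idc_cid {X} (T : topology X) (x : X) : is_cid (idc T x).
Proof.
  intros V hV. apply germ_eq_fe.
  exists (omem V). split; [exact (proj2_sig V)|]. split; [exact hV|].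
  split; [apply idc_dom|]. split; [auto|].
  intros p q e _. rewrite idc_val. exact e.
Qed.

Lemma comp_crit {X} {T : topology X} (HT : T1 T) {x y z : X}
  (phi : costalk (Homeo_l T) x y) (psi : costalk (Homeo_l T) y z) (chi : costalk (Homeo_l T) x z)
  (A B : X -> Prop) :
  is_open T A -> A x -> is_open T B -> B y ->
  (forall w, A w -> omem (gdom (csF phi)) w) ->
  (forall w, A w -> omem (gdom (csF chi)) w) ->
  (forall w, B w -> omem (gdom (csF psi)) w) ->
  (forall (p : pts (gdom (csF phi))) (q : pts (gdom (csF psi))) (r : pts (gdom (csF chi))),
     A (proj1_sig p) -> proj1_sig r = proj1_sig p -> proj1_sig q = ev (gmap (csF phi)) p ->
     B (proj1_sig q) -> ev (gmap (csF psi)) q = ev (gmap (csF chi)) r) ->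
  is_comp psi phi chi.
Proof.
  intros oA xA oB yB dA dC dB crit W hW g Hg f Hf.
  apply germ_eq_fe.
  assert (g1 : fe g (csF psi)) by exact (fe_trans (proj1 (germ_eq_fe _ _) Hg) (cs_fe psi W (ofull T) hW I)).
  assert (f1 : fe f (csF phi)) by exact (fe_trans (proj1 (germ_eq_fe _ _) Hf) (cs_fe phi (gdom g) (ofull T) (gin g) I)).
  assert (c1 : fe (cs chi hW) (csF chi)) by exact (cs_fe chi W (ofull T) hW I).
  destruct g1 as [Wg [oWg [yWg [g_dom [gF_dom eg]]]]].
  destruct f1 as [Wf [oWf [xWf [f_dom [fF_dom ef]]]]].
  destruct c1 as [Wc [oWc [xWc [c_dom [cF_dom ec]]]]].
  assert (fx : ev (gmap f) (exist _ x (gin f)) = y).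
  { rewrite (ef (exist _ x (gin f)) (exist _ x (gin (csF phi))) eq_refl xWf). apply (cs_val HT). reflexivity. }
  set (P := fun w => exists q : pts (gdom f), proj1_sig q = w /\
              (fun v => B v /\ Wg v) (proj1_sig (proj1_sig (gmap f) q))).
  assert (oP : is_open T P) by exact (lh_preim _ (proj2_sig (gmap f)) _ (open_inter oB oWg)).
  exists (fun w => A w /\ Wf w /\ Wc w /\ P w).
  split; [exact (open_inter oA (open_inter oWf (open_inter oWc oP)))|].
  split.
  { split; [exact xA|]. split; [exact xWf|]. split; [exact xWc|].
    exists (exist _ x (gin f)). split; [reflexivity|]. change (B (ev (gmap f) (exist _ x (gin f))) /\ Wg (ev (gmap f) (exist _ x (gin f)))).
    rewrite fx. auto. }
  split; [intros w [_ [h _]]; exact (f_dom w h)|].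
  split; [intros w [_ [_ [h _]]]; exact (c_dom w h)|].
  intros p r epr [hA [hWf [hWc hP]]].
  change (ev (gmap g) (proj1_sig (gmap f) p) = ev (gmap (cs chi hW)) r).
  assert (hBW : B (ev (gmap f) p) /\ Wg (ev (gmap f) p)).
  { destruct hP as [q0 [e0 h0]]. unfold ev. rewrite <- (ev_pi (proj1_sig (gmap f)) q0 p e0). exact h0. }
  destruct hBW as [hB hWg].
  set (v := proj1_sig (gmap f) p).
  assert (qdom := gF_dom _ hWg).
  rewrite (eg v (exist _ (proj1_sig v) qdom) eq_refl hWg).
  set (pF := exist _ (proj1_sig p) (dA _ hA) : pts (gdom (csF phi))).
  set (rF := exist _ (proj1_sig p) (dC _ hA) : pts (gdom (csF chi))).
  rewrite (crit pF (exist _ (proj1_sig v) qdom) rF hA eq_refl).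
  - symmetry. apply ec; [rewrite <- epr; reflexivity| rewrite <- epr; exact hWc].
  - simpl. apply (ef p pF eq_refl hWf).
  - exact hB.
Qed.

Lemma inv_exists {X} {T : topology X} {U V : opens T} (f : pts U -> pts V) (N : X -> Prop) :
  is_open T N -> (forall z, N z -> omem U z) ->
  (forall q q' : pts U, N (proj1_sig q) -> N (proj1_sig q') -> f q = f q' -> q = q') ->
  (forall O, is_open T O ->
     is_open T (fun x => exists q : pts U, proj1_sig q = x /\ N x /\ O (proj1_sig (f q)))) ->
  (forall O, is_open T O -> (forall x, O x -> N x) ->
     is_open T (fun y => exists q : pts U, O (proj1_sig q) /\ proj1_sig (f q) = y)) ->
  exists (M : opens T) (g : lhomeo M (ofull T)),
    (forall w, omem M w <-> exists q : pts U, N (proj1_sig q) /\ proj1_sig (f q) = w) /\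
    (forall w : pts M, exists q : pts U, proj1_sig q = ev g w /\ N (proj1_sig q) /\
                                        proj1_sig (f q) = proj1_sig w).
Proof.
  intros oN sN inj cont opn.
  set (M := exist _ (fun y => exists q : pts U, N (proj1_sig q) /\ proj1_sig (f q) = y)
              (opn N oN (fun z h => h)) : opens T).
  pose (hp := fun w : pts M => constructive_indefinite_description _ (proj2_sig w)).
  pose (g0 := fun w : pts M => exist (fun _ => True) (proj1_sig (proj1_sig (hp w))) I : pts (ofull T)).
  assert (S : forall w : pts M, N (proj1_sig (proj1_sig (hp w))) /\
                                proj1_sig (f (proj1_sig (hp w))) = proj1_sig w)
    by (intro w; exact (proj2_sig (hp w))).
  assert (uniq : forall (q q' : pts U), N (proj1_sig q) -> N (proj1_sig q') ->
                 proj1_sig (f q) = proj1_sig (f q') -> q = q').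
  { intros q q' h h' e. apply inj; auto. apply pts_inj. exact e. }
  assert (Hg : local_homeo g0).
  { intro p. exists (omem M). split; [exact (proj2_sig M)|]. split; [exact (proj2_sig p)|].
    split; [auto|]. split; [|split].
    - intros w w' _ _ e. apply pts_inj.
      apply (f_equal (@proj1_sig _ _)) in e. simpl in e.
      destruct (S w) as [h1 e1]. destruct (S w') as [h2 e2].
      rewrite <- e1, <- e2. f_equal. f_equal. apply pts_inj. exact e.
    - intros O oO.
      apply (open_ext (opn (fun z => N z /\ O z) (open_inter oN oO) (fun z h => proj1 h))).
      intro w; split.
      + intros [q [[hN hO] e]]. assert (hw : omem M w) by (exists q; auto).
        exists (exist _ w hw). split; [reflexivity|]. split; [exact hw|].
        simpl. destruct (S (exist _ w hw)) as [h1 e1].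
        assert (qq : proj1_sig (hp (exist _ w hw)) = q).
        { apply uniq; auto. rewrite e1, e. reflexivity. }
        subst q. exact hO.
      + intros [w' [e [_ hO]]]. subst w. destruct (S w') as [h1 e1].
        exists (proj1_sig (hp w')). split; [split; assumption| exact e1].
    - intros O oO HON.
      apply (open_ext (cont O oO)). intro z; split.
      + intros [q [e [hN hO]]]. subst z.
        assert (hw : omem M (proj1_sig (f q))) by (exists q; auto).
        exists (exist _ _ hw). split; [exact hO|]. simpl.
        destruct (S (exist _ _ hw)) as [h1 e1].
        assert (qq : proj1_sig (hp (exist _ _ hw)) = q) by (apply uniq; auto).
        exact (f_equal (@proj1_sig _ _) qq).
      + intros [q [hO e]]. subst z. destruct (S q) as [h1 e1].
        exists (proj1_sig (hp q)). split; [reflexivity|]. split; [exact h1|].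
        rewrite e1. exact hO. }
  exists M, (exist _ g0 Hg). split; [intro w; reflexivity|].
  intro w. exists (proj1_sig (hp w)). destruct (S w). split; [reflexivity|]. auto.
Qed.

Lemma homeo_groupoid {X} (T : topology X) : T1 T -> cond_groupoid (Homeo_l T).
Proof.
  intros HT x y phi.
  set (aF := csF phi).
  set (p0 := exist _ x (gin aF) : pts (gdom aF)).
  assert (hf0 : ev (gmap aF) p0 = y) by (apply (cs_val HT); reflexivity).
  destruct (proj2_sig (gmap aF) p0) as [N [oN [pN [sN [inj [cont opn]]]]]].
  destruct (inv_exists _ N oN sN inj cont opn) as [M [g [HM Hg]]].
  assert (hyM : omem M y) by (apply HM; exists p0; split; [exact pN| exact hf0]).
  assert (eg : ev g (exist _ y hyM) = x).
  { destruct (Hg (exist _ y hyM)) as [q [e [hN ef]]]. rewrite <- e.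
    assert (q = p0).
    { apply inj; auto. apply pts_inj. transitivity y; [exact ef| symmetry; exact hf0]. }
    subst q. reflexivity. }
  pose (gM := @GR X T (Homeo_l T) y (ofull T) M hyM g).
  set (psi := mk_cs gM eg).
  exists psi, (idc T x), (idc T y).
  split; [apply idc_cid|]. split; [apply idc_cid|]. split.
  - apply (comp_crit HT phi psi (idc T x) N (omem M) oN pN (proj2_sig M) hyM).
    + exact sN.
    + intros w _. apply idc_dom. exact I.
    + intros w hw. exists (exist _ w hw). split; [reflexivity| exact I].
    + intros p q r hA er eq hB.
      unfold csF. rewrite idc_val.
      transitivity (ev (gmap gM) (exist _ (proj1_sig q) hB)); [exact (mk_val gM eg (ofull T) I q (exist _ (proj1_sig q) hB) eq_refl)|].
      destruct (Hg (exist _ (proj1_sig q) hB)) as [q' [e [hN ef]]].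
      change (ev g (exist (omem M) (proj1_sig q) hB) = proj1_sig r).
      rewrite <- e. rewrite er.
      assert (q' = p) as ->; [|reflexivity].
      apply inj; auto. apply pts_inj. rewrite ef. simpl. exact eq.
  - apply (comp_crit HT psi phi (idc T y) (omem M) N (proj2_sig M) hyM oN pN).
    + intros w hw. exists (exist _ w hw). split; [reflexivity| exact I].
    + intros w _. apply idc_dom. exact I.
    + exact sN.
    + intros p q r hA er eq hB.
      change (ev (gmap (csF phi)) q = proj1_sig r). rewrite er.
      destruct (proj2_sig p) as [pm [epm _]].
      rewrite (mk_val gM eg (ofull T) I p pm (eq_sym epm) : ev (gmap (csF psi)) p = _) in eq.
      destruct (Hg pm) as [q' [e [hN ef]]].
      assert (qq : q = q') by (apply pts_inj; transitivity (ev g pm); [exact eq| symmetry; exact e]).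
      subst q'. unfold ev. rewrite <- epm. exact ef.
Qed.

Theorem mainTheorem2 (X : Type) (T : topology X) :
  T1 T -> pseudogroup_sheaf (Homeo_l T).
Proof.
  intro HT. split; [split; [apply homeo_ocat| split; [apply homeo_bij; exact HT| apply homeo_groupoid; exact HT]]|].
  apply homeo_sheaf.
Qed.
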